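(* For every $M\in\mathbb N$ and every prime power $q$, for almost all $a\in(\mathbb F_q^M)^\infty$ (uniform product measure), $$\lim_{n\to\infty}\frac{L_a(n)}{n}=\frac{M}{M+1}.$$
   Context: Let $q$ be a prime power and $M\ge1$. For $a=(a_{k,m})_{k\ge1,\,1\le m\le M}\in(\mathbb F_q^M)^\infty$ and $n\in\mathbb N_0$, the linear complexity $L_a(n)$ is the least $L\ge0$ such that there exist $c_1,\dots,c_L\in\mathbb F_q$ with $a_{k,m}=\sum_{i=1}^L c_i a_{k-i,m}$ for all $L<k\le n$ and all $1\le m\le M$ (a single linear feedback shift register of length $L$ generating the first $n$ terms of all $M$ sequences); $L_a(0)=0$. *)

(* Defs.v *)
From HB Require Import structures.
From mathcomp Require Import all_boot all_order all_algebra all_field.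
From mathcomp Require Import boolp classical_sets reals topology normedtype sequences.
From mathcomp Require Import filter.
Import numFieldNormedType.Exports.
Set Implicit Arguments. Unset Strict Implicit. Unset Printing Implicit Defensive.
Import Order.TTheory GRing.Theory Num.Theory.
Local Open Scope ring_scope.

(* A multisequence a in (F^M)^oo is a : nat -> 'I_M -> F, where a k m is the
   paper's a_{k+1, m+1} (0-based indices). *)

(* A single LFSR of length L with coefficients c_1..c_L (here c 0 .. c (L-1))
   generates the first n terms of all M sequences. *)
Definition lfsr_generates (F : fieldType) (M : nat) (a : nat -> 'I_M -> F)
    (n L : nat) : Prop :=
  exists c : nat -> F, forall k : nat, (L <= k < n)%N ->
    forall m : 'I_M, a k m = \sum_(i < L) c i * a (k - i.+1)%N m.

Lemma lfsr_generates_n (F : fieldType) (M : nat) (a : nat -> 'I_M -> F) (n : nat) :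
  exists L, `[< lfsr_generates a n L >].
Proof.
exists n; apply/asboolP; exists (fun _ => 0) => k /andP[H1 H2].
by move: (leq_trans H2 H1); rewrite ltnn.
Qed.

Definition linear_complexity (F : fieldType) (M : nat) (a : nat -> 'I_M -> F)
    (n : nat) : nat :=
  ex_minn (lfsr_generates_n a n).

(* Cylinder set of multisequences with a prescribed prefix of length k
   (given by the first k values of p); its uniform product measure is
   q^(-M k) with q = #|F|. *)
Definition cylinder (F : finFieldType) (M : nat) (k : nat) (p : nat -> 'I_M -> F)
  : set (nat -> 'I_M -> F) :=
  [set a | forall i, (i < k)%N -> forall m, a i m = p i m].

Definition null_set (R : realType) (F : finFieldType) (M : nat)
    (N : set (nat -> 'I_M -> F)) : Prop :=
  forall eps : R, 0 < eps ->
    exists (k : nat -> nat) (p : nat -> nat -> 'I_M -> F),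
      (N `<=` \bigcup_j cylinder (k j) (p j))%classic /\
      forall J : nat, \sum_(j < J) ((#|F|%:R : R) ^- (M * k j)) <= eps.

Definition almost_all (R : realType) (F : finFieldType) (M : nat)
    (P : (nat -> 'I_M -> F) -> Prop) : Prop :=
  null_set R [set a | ~ P a]%classic.

(* Main.v *)
Require Import Defs.
From HB Require Import structures.
From mathcomp Require Import all_boot all_order all_algebra all_field.
From mathcomp Require Import boolp classical_sets reals topology normedtype sequences.
From mathcomp Require Import filter.
From mathcomp Require Import zify.
Import numFieldNormedType.Exports.
Import Order.TTheory GRing.Theory Num.Theory.
Local Open Scope classical_set_scope.
Local Open Scope ring_scope.
Set Implicit Arguments. Unset Strict Implicit. Unset Printing Implicit Defensive.
From mathcomp Require Import ring lra.
Section LC.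
Variable F : finFieldType.
Variable M : nat.
Local Notation Seq := (nat -> 'I_M -> F).

Lemma lc_gen (a : Seq) n : lfsr_generates a n (linear_complexity a n).
Proof.
rewrite /linear_complexity; case: ex_minnP => L /asboolP H _; exact: H.
Qed.

Lemma lc_min (a : Seq) n L : lfsr_generates a n L -> (linear_complexity a n <= L)%N.
Proof.
move=> H; rewrite /linear_complexity; case: ex_minnP => L0 _ Hm.
by apply: Hm; apply/asboolP.
Qed.

Lemma gen_mono (a : Seq) n L L' : lfsr_generates a n L -> (L <= L')%N ->
  lfsr_generates a n L'.
Proof.
move=> [c Hc] LL'; exists (fun i => if (i < L)%N then c i else 0) => k /andP[Hk1 Hk2] m.
rewrite (Hc k _ m); last by rewrite Hk2 (leq_trans LL' Hk1).
rewrite (big_ord_widen_cond L' (fun i => true) (fun i => c i * a (k - i.+1)%N m) LL').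
rewrite [RHS](bigID (fun i : 'I_L' => (i < L)%N)) /= [X in _ = _ + X]big1 ?addr0.
  by apply: eq_bigr => i ->.
by move=> i /negbTE ->; rewrite mul0r.
Qed.

Lemma lc_leP (a : Seq) n L : (linear_complexity a n <= L)%N <-> lfsr_generates a n L.
Proof.
split; last exact: lc_min.
by move=> H; apply: gen_mono H; apply: lc_gen.
Qed.

Lemma gen_ext (a b : Seq) n L : (forall i m, (i < n)%N -> a i m = b i m) ->
  lfsr_generates a n L -> lfsr_generates b n L.
Proof.
move=> E [c Hc]; exists c => k /andP[k1 k2] m.
rewrite -E // (Hc k _ m) ?k1 ?k2 //; apply: eq_bigr => i _.
by rewrite E // (leq_ltn_trans _ k2) // leq_subr.
Qed.

Lemma lc_ext (a b : Seq) n : (forall i m, (i < n)%N -> a i m = b i m) ->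
  linear_complexity a n = linear_complexity b n.
Proof.
move=> E; apply/eqP; rewrite eqn_leq; apply/andP; split; apply/lc_leP.
  by apply: gen_ext (lc_gen b n) => i m H; rewrite E.
exact: gen_ext E (lc_gen a n).
Qed.

Definition W n := {ffun 'I_n -> {ffun 'I_M -> F}}.
Definition ext n (w : W n) : Seq := fun i m =>
  if insub i is Some j then w j m else 0.

Lemma extE n (w : W n) i m (h : (i < n)%N) : ext w i m = w (Ordinal h) m.
Proof. by rewrite /ext insubT. Qed.

Lemma ext_out n (w : W n) i m : (n <= i)%N -> ext w i m = 0.
Proof. by move=> h; rewrite /ext insubF // ltnNge h. Qed.

Definition trunc n (a : Seq) : W n := [ffun j => [ffun m => a (val j) m]].

Lemma ext_trunc n (a : Seq) i m : (i < n)%N -> ext (trunc n a) i m = a i m.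
Proof. by move=> h; rewrite (extE _ _ h) !ffunE. Qed.

Lemma card_W n : #|{: W n}| = ((#|F| ^ M) ^ n)%N.
Proof. by rewrite /W card_ffun card_ffun !card_ord. Qed.

End LC.
Section Count1.
Variable F : finFieldType.
Variable M : nat.
Local Notation Seq := (nat -> 'I_M -> F).

Definition cw n L (w : W F M n) : nat -> F :=
  match pselect (lfsr_generates (ext w) n L) with
  | left H => projT1 (cid H) | right _ => fun _ => 0 end.

Lemma cwP n L (w : W F M n) : lfsr_generates (ext w) n L ->
  forall k, (L <= k < n)%N -> forall m,
    ext w k m = \sum_(i < L) cw L w i * ext w (k - i.+1)%N m.
Proof.
rewrite /cw; case: pselect => // H _; exact: (projT2 (cid H)).
Qed.

Lemma count_gen n L :
  (#|[set w : W F M n | `[< lfsr_generates (ext w) n L >]]%SET| <=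
     #|F| ^ L * (#|F| ^ M) ^ L)%N.
Proof.
pose f (w : W F M n) : {ffun 'I_L -> F} * {ffun 'I_L -> {ffun 'I_M -> F}} :=
  ([ffun i : 'I_L => cw L w i], [ffun i : 'I_L => [ffun m => ext w i m]]).
rewrite -(card_in_imset (f := f)); last first.
  move=> w1 w2; rewrite !inE => H1 H2 [E1 E2].
  have E : forall k m, ext w1 k m = ext w2 k m.
    elim/ltn_ind => k IH m.
    case: (ltnP k L) => kL.
      have := congr1 (fun g : {ffun 'I_L -> {ffun 'I_M -> F}} => g (Ordinal kL) m) E2.
      by rewrite /= !ffunE.
    case: (ltnP k n) => kn; last by rewrite !ext_out.
    rewrite (cwP H1) ?kL ?kn // (cwP H2) ?kL ?kn //.
    apply: eq_bigr => i _.
    have := congr1 (fun g : {ffun 'I_L -> F} => g i) E1; rewrite /= !ffunE => ->.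
    congr (_ * _); apply: IH.
    have := ltn_ord i; lia.
  apply/ffunP => j; apply/ffunP => m.
  by case: j => j hj; rewrite -!(extE _ _ hj) E.
apply: leq_trans (max_card _) _.
by rewrite card_prod !card_ffun !card_ord.
Qed.

End Count1.
Lemma q_gt0 (F : finFieldType) : (0 < #|F|)%N.
Proof. exact: ltnW (card_finNzRing_gt1 F). Qed.

Lemma card_bigcup_le (I T : finType) (P : pred I) (Z : I -> {set T}) :
  (#|\bigcup_(i | P i) Z i| <= \sum_(i | P i) #|Z i|)%N.
Proof.
apply: (big_ind2 (fun (A : {set T}) (s : nat) => #|A| <= s)%N); first by rewrite cards0.
  move=> A1 s1 A2 s2 h1 h2; apply: leq_trans (leq_card_setU A1 A2) _.
  exact: leq_add.
by [].
Qed.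

Section Count2.
Variable F : finFieldType.
Variable M : nat.
Variables n L : nat.
Local Notation T := ('I_(n - L) * 'I_M)%type.
Local Notation r := #|{: T}|.
Definition ev (i : 'I_r) : T := enum_val i.
Lemma evK : cancel (fun x : T => enum_rank x) ev. Proof. exact: enum_rankK. Qed.
Lemma ev_inj : injective ev. Proof. exact: enum_val_inj. Qed.

Definition Amx (w : W F M n) : 'M[F]_(r, L) :=
  \matrix_(i, j) ext w (L + (ev i).1 - j.+1)%N (ev i).2.

Lemma free_gen (w : W F M n) : row_free (Amx w) -> lfsr_generates (ext w) n L.
Proof.
move=> /row_freeP [B HB].
pose b : 'cV[F]_r := \col_i ext w (L + (ev i).1)%N (ev i).2.
pose cv := B *m b.
have Hc : Amx w *m cv = b by rewrite /cv mulmxA HB mul1mx.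
exists (fun i => if insub i is Some j then cv j 0 else 0) => k /andP[k1 k2] m.
have hk' : (k - L < n - L)%N by lia.
pose i := enum_rank (Ordinal hk', m).
have := congr1 (fun X : 'cV[F]_r => X i 0) Hc; rewrite /= !mxE.
rewrite evK /= subnKC // => <-.
apply: eq_bigr => j _; rewrite valK /= mulrC /Amx mxE /i evK /= subnKC //.
Qed.

Lemma nonfree_ker (A : 'M[F]_(r, L)) : ~~ row_free A ->
  exists d : 'rV[F]_r, d != 0 /\ d *m A = 0.
Proof.
rewrite -kermx_eq0 => H.
have [i Hi] : exists i, row i (kermx A) != 0.
  apply/existsP; apply: contraR H => /existsPn H.
  apply/eqP/row_matrixP => i; rewrite row0; exact/eqP/negPn/H.
exists (row i (kermx A)); split => //.
by rewrite -row_mul mulmx_ker row0.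
Qed.

Lemma count_Z (d : 'rV[F]_r) : d != 0 ->
  (#|[set w : W F M n | d *m Amx w == 0%R]%SET| <= #|F| ^ (n * M - L))%N.
Proof.
move=> dn0.
have [i0 Hi0] : exists i, d 0 i != 0.
  apply/existsP; apply: contraR dn0 => /existsPn H.
  apply/eqP/rowP => i; rewrite mxE; exact/eqP/negPn/H.
case: (@arg_maxnP _ i0 (fun i => d 0 i != 0) (fun i => nat_of_ord (ev i).1) Hi0)
  => ist Hst Hmax.
set ks : nat := nat_of_ord (ev ist).1.
set ms := (ev ist).2.
have hks : (ks + L <= n)%N by have := ltn_ord (ev ist).1; rewrite /ks; lia.
pose lead s m := (m == ms) && (ks <= s < ks + L)%N.
have inj : forall w1 w2 : W F M n, d *m Amx w1 = 0 -> d *m Amx w2 = 0 ->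
    (forall s m, ~~ lead s m -> ext w1 s m = ext w2 s m) ->
    forall s m, ext w1 s m = ext w2 s m.
  move=> w1 w2 Z1 Z2 Hoff; elim/ltn_ind => s IH m.
  case: (boolP (lead s m)) => hl; last exact: Hoff.
  move: hl; rewrite /lead => /andP[/eqP -> /andP[s1 s2]].
  have hj : (ks + L - s.+1 < L)%N by lia.
  pose jo := Ordinal hj.
  have E1 := congr1 (fun X : 'rV[F]_L => X 0 jo) Z1.
  have E2 := congr1 (fun X : 'rV[F]_L => X 0 jo) Z2.
  have Ai : forall w, Amx w ist jo = ext w s ms.
    move=> w; rewrite /Amx mxE; congr (ext w _ _); rewrite /= -/ks; lia.
  move: E1 E2; rewrite /= !mxE => E1 E2.
  rewrite (bigD1 ist) //= Ai in E1; rewrite (bigD1 ist) //= Ai in E2.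
  have Req : \sum_(i | i != ist) d 0 i * Amx w1 i jo =
            \sum_(i | i != ist) d 0 i * Amx w2 i jo.
    apply: eq_bigr => i hi.
    case: (eqVneq (d 0 i) 0) => [->|dn]; first by rewrite !mul0r.
    congr (_ * _); rewrite !mxE.
    have hmx := Hmax i dn.
    case: (eqVneq (ev i).2 ms) => hm; last first.
      by apply: Hoff; rewrite /lead (negbTE hm).
    have hlt : (nat_of_ord (ev i).1 < ks)%N.
      rewrite ltn_neqAle; apply/andP; split; last exact: hmx.
      apply: contra hi => /eqP he.
      apply/eqP; apply: ev_inj.
      rewrite [ev i]surjective_pairing [ev ist]surjective_pairing hm.
      by congr pair; apply/val_inj.
    apply: IH; rewrite /=; lia.
  rewrite Req in E1; apply: (mulfI Hst); apply: (addIr (\sum_(i | i != ist) d 0 i * Amx w2 i jo)).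
  by rewrite E1 E2.
pose D := [pred x : 'I_n * 'I_M | ~~ lead x.1 x.2].
pose g (w : W F M n) : {ffun {x : 'I_n * 'I_M | ~~ lead x.1 x.2} -> F} :=
  [ffun x => w (val x).1 (val x).2].
rewrite -(card_in_imset (f := g)); last first.
  move=> w1 w2; rewrite !inE => /eqP Z1 /eqP Z2 Eg.
  have E := inj w1 w2 Z1 Z2.
  have E' : forall s m, ext w1 s m = ext w2 s m.
    apply: E => s m hl; case: (ltnP s n) => hs; last by rewrite !ext_out.
    rewrite !(extE _ _ hs).
    have := congr1 (fun f : {ffun {x : 'I_n * 'I_M | ~~ lead x.1 x.2} -> F} =>
       f (exist _ (Ordinal hs, m) hl)) Eg.
    by rewrite /= !ffunE.
  apply/ffunP => j; apply/ffunP => m.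
  by case: j => j hj; rewrite -!(extE _ _ hj) E'.
apply: leq_trans (max_card _) _.
rewrite card_ffun card_sig (leq_pexp2l (q_gt0 F)) //.
pose sh (j : 'I_L) : 'I_n * 'I_M :=
  (Ordinal (leq_trans (etrans (ltn_add2l ks j L) (ltn_ord j)) hks), ms).
have cl : (L <= #|[predC D]|)%N.
  rewrite -[X in (X <= _)%N](card_ord L) -(card_imset _ (f := sh)); last first.
    by move=> j1 j2 [] /eqP; rewrite eqn_add2l => /eqP /val_inj.
  have Hs : sh @: 'I_L \subset [predC D].
    apply/fintype.subsetP => x /imsetP [j _ ->].
    by rewrite !inE /= negbK /lead /= eqxx leq_addr /= ltn_add2l ltn_ord.
  exact: subset_leq_card Hs.
have := cardC D; rewrite card_prod !card_ord => e.
change (#|D| <= n * M - L)%N.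
move: cl e; set c := #|[predC D]|; set c' := #|D|; move=> cl e; lia.
Qed.

Lemma count_nongen : (L <= n)%N ->
  (#|[set w : W F M n | ~~ `[< lfsr_generates (ext w) n L >]]%SET| <=
     #|F| ^ ((n - L) * M) * #|F| ^ (n * M - L))%N.
Proof.
move=> hL.
apply: (@leq_trans #|\bigcup_(d : 'rV[F]_r | d != 0) [set w : W F M n | d *m Amx w == 0%R]%SET|).
  apply: subset_leq_card; apply/fintype.subsetP => w; rewrite inE => Hw.
  have : ~~ row_free (Amx w).
    apply: contra Hw => /free_gen H; exact/asboolP.
  move=> /nonfree_ker [d [dn Hd]]; apply/bigcupP; exists d => //.
  by rewrite inE Hd.
apply: leq_trans (card_bigcup_le _ _) _.
apply: (@leq_trans (\sum_(d : 'rV[F]_r) #|F| ^ (n * M - L))).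
  apply: (@leq_trans (\sum_(d : 'rV[F]_r | d != 0) #|F| ^ (n * M - L))).
    apply: leq_sum => d dn; apply: leq_trans (count_Z dn).
    by apply: subset_leq_card; apply/fintype.subsetP => w; rewrite !inE.
  by rewrite [X in (_ <= X)%N](bigID (fun d : 'rV[F]_r => d != 0)) /= leq_addr.
rewrite sum_nat_const card_mx card_prod !card_ord mul1n.
by rewrite mulnC.
Qed.

End Count2.
Lemma pow_le (a b s : nat) : (a <= b)%N -> (a ^ s <= b ^ s)%N.
Proof. by move=> h; elim: s => // s IH; rewrite !expnS leq_mul. Qed.

Lemma ar_hi (M n s x Lh : nat) : (M * n + s < M.+1 * x)%N -> (x <= Lh)%N ->
  (Lh * M.+1 <= M * n + s)%N -> False.
Proof.
move=> h1 h2 h3.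
have : (M.+1 * x <= Lh * M.+1)%N by rewrite mulnC leq_mul2r h2 orbT.
lia.
Qed.

Lemma ar_chi (Y X Lh r s M n : nat) : (Y + s = Lh + X + r)%N -> (r < M.+1)%N ->
  (X <= Y)%N -> (n <= Y)%N -> (Lh <= n)%N ->
  (Y - X + (Y - Lh) <= Y + M - s)%N.
Proof. lia. Qed.

Lemma ar_e1 (Y s n M : nat) : (s <= n)%N -> (n <= Y)%N -> (Y - s + s <= M + Y)%N.
Proof. lia. Qed.
Lemma ar_e2 (Y s n M : nat) : (s <= n)%N -> (n <= Y)%N -> (Y + M - s + s <= M + Y)%N.
Proof. lia. Qed.

Section Bad.
Variable F : finFieldType.
Variable M : nat.
Hypothesis M0 : (0 < M)%N.
Local Notation Seq := (nat -> 'I_M -> F).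
Local Notation q := #|F|.

Definition badp (t n : nat) (a : Seq) : bool :=
  let x := linear_complexity a n in let s := (n %/ t.+1)%N in
  ((M.+1 * x + s < M * n) || (M * n + s < M.+1 * x))%N.

Definition Badset t n := [set w : W F M n | badp t n (ext w)]%SET.

Lemma count_bad t n : (#|Badset t n| * 2 ^ (n %/ t.+1) <= 2 * q ^ M * q ^ (M * n))%N.
Proof.
set s := (n %/ t.+1)%N.
have sn : (s <= n)%N by rewrite /s leq_div.
have q1 := card_finNzRing_gt1 F.
have q2 : (2 <= q)%N by [].
pose Ls := ((M * n - s).-1 %/ M.+1)%N.
pose Lh := ((M * n + s) %/ M.+1)%N.
have hLs : (M.+1 * Ls <= M * n - s)%N.
  rewrite /Ls mulnC; apply: leq_trans (leq_trunc_div _ _) _; lia.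
have hLh1 := divn_eq (M * n + s) M.+1.
have hLh2 : ((M * n + s) %% M.+1 < M.+1)%N := ltn_pmod _ (ltn0Sn _).
have hLhn : (Lh <= n)%N.
  rewrite /Lh -ltnS ltn_divLR // mulSn mulnS [(n * M)%N]mulnC; lia.
have cLo : (#|[set w : W F M n | `[< lfsr_generates (ext w) n Ls >]]%SET| <= q ^ (M * n - s))%N.
  apply: leq_trans (count_gen _ _ _ _) _.
  rewrite -expnM -expnD; apply: leq_pexp2l; first by apply: ltnW.
  move: hLs; rewrite mulSn; lia.
have cHi := @count_nongen F M n Lh hLhn.
have cHi' : (#|[set w : W F M n | ~~ `[< lfsr_generates (ext w) n Lh >]]%SET| <= q ^ (M * n + M - s))%N.
  apply: leq_trans cHi _; rewrite -expnD; apply: leq_pexp2l; first by apply: ltnW.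
  rewrite -/Lh in hLh1 hLh2; rewrite mulnBl [(n * M)%N]mulnC.
  have := hLh1; rewrite mulnS => e.
  apply: (ar_chi e hLh2); last exact: hLhn.
    by rewrite mulnC leq_mul2l hLhn orbT.
  by rewrite leq_pmull.
have sub : Badset t n \subset
    [set w : W F M n | `[< lfsr_generates (ext w) n Ls >]]%SET :|:
    [set w : W F M n | ~~ `[< lfsr_generates (ext w) n Lh >]]%SET.
  apply/fintype.subsetP => w; rewrite !inE /badp -/s => /orP [h|h]; apply/orP.
    left; apply/asboolP/lc_leP; rewrite /Ls leq_divRL //.
    move: h; set x := linear_complexity _ _; rewrite [(x * _)%N]mulnC mulSn; lia.
  right; apply/negP => /asboolP /lc_leP h2.
  exact: (ar_hi h h2 (leq_trunc_div (M * n + s) M.+1)).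
have cB : (#|Badset t n| <= q ^ (M * n - s) + q ^ (M * n + M - s))%N.
  apply: leq_trans (subset_leq_card sub) _.
  apply: leq_trans (leq_card_setU _ _) _; exact: leq_add cLo cHi'.
have e1 : (q ^ (M * n - s) * 2 ^ s <= q ^ M * q ^ (M * n))%N.
  apply: (@leq_trans (q ^ (M * n - s) * q ^ s)).
    by rewrite leq_mul2l pow_le // orbT.
  rewrite -!expnD; apply: leq_pexp2l; first by apply: ltnW.
  by apply: ar_e1 sn _; rewrite leq_pmull.
have e2 : (q ^ (M * n + M - s) * 2 ^ s <= q ^ M * q ^ (M * n))%N.
  apply: (@leq_trans (q ^ (M * n + M - s) * q ^ s)).
    by rewrite leq_mul2l pow_le // orbT.
  rewrite -!expnD; apply: leq_pexp2l; first by apply: ltnW.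
  by apply: ar_e2 sn _; rewrite leq_pmull.
apply: leq_trans (leq_mul cB (leqnn _)) _.
rewrite mulnDl -mulnA mul2n -addnn; exact: leq_add.
Qed.

End Bad.
Section Flat.
Variable R : realType.
Variable F : finFieldType.
Variable M : nat.
Local Notation Seq := (nat -> 'I_M -> F).
Local Notation mu k := ((#|F|%:R : R) ^- (M * k)).

Lemma mu_ge0 k : 0 <= mu k.
Proof. by rewrite invr_ge0 exprn_ge0 // ler0n. Qed.

Definition x0 : nat * Seq := (0%N, fun _ _ => 0).

Section G.
Variable g : nat -> seq (nat * Seq).
Definition Sg N := flatten (map g (iota 0 N)).

Lemma Sg_add N d : Sg (N + d) = Sg N ++ flatten (map g (iota N d)).
Proof. by rewrite /Sg iotaD map_cat flatten_cat. Qed.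

Lemma Sg_S N : Sg N.+1 = Sg N ++ g N.
Proof. by rewrite -addn1 Sg_add /= cats0. Qed.

Lemma nth_Sg N N' j : (j < size (Sg N))%N -> (N <= N')%N ->
  nth x0 (Sg N') j = nth x0 (Sg N) j.
Proof.
move=> hj /subnKC <-; by rewrite Sg_add nth_cat hj.
Qed.

Hypothesis gne : forall n, (0 < size (g n))%N.

Lemma size_Sg N : (N <= size (Sg N))%N.
Proof.
elim: N => // N IH; rewrite Sg_S size_cat.
by have := gne N; lia.
Qed.

Lemma flat_cover (S : set Seq) (eps : R) :
  (forall a, S a -> exists n i, (i < size (g n))%N /\
      cylinder (nth x0 (g n) i).1 (nth x0 (g n) i).2 a) ->
  (forall N, \sum_(n < N) \sum_(c <- g n) mu c.1 <= eps) ->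
  exists (k : nat -> nat) (p : nat -> Seq),
    (S `<=` \bigcup_j cylinder (k j) (p j)) /\
    forall J : nat, \sum_(j < J) mu (k j) <= eps.
Proof.
move=> Hcov Hsum.
exists (fun j => (nth x0 (Sg j.+1) j).1), (fun j => (nth x0 (Sg j.+1) j).2); split.
  move=> a /Hcov [n [i [hi Ha]]].
  exists (size (Sg n) + i)%N => //.
  have hs : (size (Sg n) + i < size (Sg n.+1))%N by rewrite Sg_S size_cat ltn_add2l.
  have hn : (n.+1 <= (size (Sg n) + i).+1)%N by have := size_Sg n; lia.
  rewrite (nth_Sg hs hn) Sg_S nth_cat ltnNge leq_addr /= addKn.
  exact: Ha.
move=> J.
have E : \sum_(j < J) mu (nth x0 (Sg j.+1) j).1 =
         \sum_(c <- take J (Sg J)) mu c.1.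
  rewrite (big_nth x0) size_take.
  have hJ := size_Sg J.
  have -> : (if (J < size (Sg J))%N then J else size (Sg J)) = J.
    by case: ltnP => // h; apply/eqP; rewrite eqn_leq h hJ.
  rewrite big_mkord; apply: eq_bigr => j _.
  rewrite nth_take //; congr (mu (_).1).
  rewrite (nth_Sg (N := j.+1)) //.
  by have := size_Sg j.+1; lia.
rewrite E; apply: le_trans (Hsum J).
apply: (@le_trans _ _ (\sum_(c <- Sg J) mu c.1)).
  rewrite -{2}(cat_take_drop J (Sg J)) big_cat /= lerDl.
  by apply: sumr_ge0 => c _; apply: mu_ge0.
rewrite /Sg big_flatten /= big_map.
have -> : iota 0 J = index_iota 0 J by rewrite /index_iota subn0.
by rewrite big_mkord.
Qed.

End G.
End Flat.
Section Geo.
Variable R : realType.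
Definition hh (k : nat) : R := ((2 : R) ^+ k)^-1.

Lemma hh_gt0 k : 0 < hh k.
Proof. by rewrite /hh invr_gt0 exprn_gt0. Qed.
Lemma hh_ge0 k : 0 <= hh k.
Proof. exact/ltW/hh_gt0. Qed.
Lemma hhD a b : hh (a + b) = hh a * hh b.
Proof. by rewrite /hh exprD invfM. Qed.
Lemma hhS k : hh k = 2 * hh k.+1.
Proof.
rewrite /hh exprS invfM mulrA mulfV ?mul1r //.
by rewrite pnatr_eq0.
Qed.

Lemma geo_sum N : \sum_(i < N) hh i.+1 = 1 - hh N.
Proof.
elim: N => [|N IH]; first by rewrite big_ord0 /hh expr0 invr1 subrr.
rewrite big_ord_recr /= IH (hhS N); lra.
Qed.

Lemma geo_le1 N : \sum_(i < N) hh i.+1 <= 1.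
Proof. by rewrite geo_sum lerBlDr lerDl hh_ge0. Qed.

Lemma geo_le2 N : \sum_(0 <= i < N) hh i <= 2.
Proof.
rewrite big_mkord (eq_bigr (fun i : 'I_N => 2 * hh i.+1)); last by move=> i _; rewrite -hhS.
by rewrite -mulr_sumr; have := geo_le1 N; lra.
Qed.

Lemma block T u : (0 < T)%N ->
  \sum_(0 <= i < (T * u)%N) hh (i %/ T) = T%:R * \sum_(0 <= v < u) hh v.
Proof.
move=> T0; elim: u => [|u IH]; first by rewrite muln0 !big_geq // mulr0.
rewrite mulnSr (@big_cat_nat _ _ _ (T * u)%N) ?leq_addr //= IH.
rewrite big_nat_recr //= mulrDr; congr (_ + _).
rewrite -{1}(add0n (T * u)%N) big_addn addKn.
rewrite (eq_big_nat _ _ (F2 := fun _ => hh u)); last first.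
  move=> i /andP[_ hi]; rewrite mulnC divnDMl // divn_small //.
by rewrite sumr_const_nat subn0 mulr_natl.
Qed.

Lemma sum_ext (f : nat -> R) (P : pred nat) N N' : (N <= N')%N ->
  (forall i, 0 <= f i) ->
  \sum_(0 <= n < N | P n) f n <= \sum_(0 <= n < N' | P n) f n.
Proof.
move=> hN f0; rewrite [X in _ <= X](@big_cat_nat _ _ _ N) //= lerDl.
by apply: sumr_ge0 => i _.
Qed.

Lemma sum_div T N : (0 < T)%N -> \sum_(0 <= i < N) hh (i %/ T) <= 2 * T%:R.
Proof.
move=> T0.
have hN : (N <= T * N)%N by rewrite leq_pmull.
apply: le_trans (sum_ext xpredT hN (fun i => hh_ge0 _)) _.
rewrite block // mulrC ler_wpM2r //; exact: geo_le2.
Qed.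

Lemma tail T K N : (0 < T)%N ->
  \sum_(n < N | (T * K <= n)%N) hh (n %/ T) <= 2 * T%:R * hh K.
Proof.
move=> T0.
rewrite -(big_mkord (fun n => (T * K <= n)%N) (fun n => hh (n %/ T))).
apply: (@le_trans _ _ (\sum_(0 <= n < (T * K + N)%N | (T * K <= n)%N) hh (n %/ T))).
  apply: sum_ext; last by move=> i; apply: hh_ge0.
  exact: leq_addl.
rewrite (@big_cat_nat _ _ _ (T * K)%N) ?leq_addr //=.
rewrite big_nat_cond big1 ?add0r; last first.
  by move=> i /andP[/andP[_ h1] h2]; move: h1 h2; rewrite ltnNge => /negbTE ->.
rewrite big_nat_cond.
rewrite (eq_bigl (fun i => (T * K <= i < T * K + N)%N && true)); last first.
  by move=> i; case: (T * K <= i)%N; rewrite ?andbT.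
rewrite -big_nat_cond -{1}(add0n (T * K)%N) big_addn addKn.
rewrite (eq_bigr (fun i => hh (i %/ T) * hh K)); last first.
  by move=> i _; rewrite [(T * K)%N]mulnC divnDMl // hhD.
rewrite -mulr_suml ler_wpM2r ?hh_ge0 //; exact: sum_div.
Qed.
End Geo.
Section Meas.
Variable R : realType.
Variable F : finFieldType.
Variable M : nat.
Hypothesis M0 : (0 < M)%N.
Local Notation Seq := (nat -> 'I_M -> F).
Local Notation mu k := ((#|F|%:R : R) ^- (M * k)).
Local Notation q := #|F|.

Lemma muE k : mu k = ((q ^ (M * k))%:R)^-1.
Proof. by rewrite natrX. Qed.

Lemma hhE k : hh R k = ((2 ^ k)%:R)^-1.
Proof. by rewrite /hh natrX. Qed.

Lemma mu_le_hh k : mu k <= hh R k.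
Proof.
rewrite muE hhE lef_pV2 ?posrE ?ltr0n ?expn_gt0 ?q_gt0 // ler_nat.
apply: (@leq_trans (2 ^ (M * k))).
  by rewrite leq_pexp2l // leq_pmull.
exact: pow_le (card_finNzRing_gt1 F).
Qed.

Lemma level_bound t n :
  #|Badset F M t n|%:R * mu n <= (2 * q ^ M)%:R * hh R (n %/ t.+1).
Proof.
have H := @count_bad F M M0 t n.
rewrite muE hhE.
have Q0 : (0 : R) < (q ^ (M * n))%:R by rewrite ltr0n expn_gt0 q_gt0.
have S0 : (0 : R) < (2 ^ (n %/ t.+1))%:R by rewrite ltr0n expn_gt0.
rewrite ler_pdivlMr // mulrAC ler_pdivrMr //.
by rewrite -!natrM ler_nat.
Qed.

Lemma hh_small (y : R) : 0 < y -> exists K, (0 < K)%N /\ hh R K <= y.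
Proof.
move=> y0.
have hy : 0 <= y^-1 by rewrite invr_ge0 ltW.
have := archi_boundP hy; set K := Num.Def.archi_bound _ => hK.
exists K.+1; split => //.
rewrite hhE -[y]invrK lef_pV2 ?posrE ?ltr0n ?expn_gt0 ?invr_gt0 //.
apply: (le_trans (ltW hK)); rewrite ler_nat.
apply: leq_trans (ltnW (ltn_expl K (ltnSn 1))) _.
by rewrite leq_exp2l.
Qed.

End Meas.

Section ListIn.
Variable T : Type.

Lemma In_idx (d : T) (x : T) (s : seq T) : List.In x s ->
  exists i, (i < size s)%N /\ nth d s i = x.
Proof.
elim: s => //= y s IH [->|/IH [i [hi hx]]]; first by exists 0%N.
by exists i.+1.
Qed.

Lemma In_flatten (x : T) (s : seq T) (ss : seq (seq T)) :
  List.In x s -> List.In s ss -> List.In x (flatten ss).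
Proof.
move=> hx; elim: ss => //= s' ss IH [->|/IH h].
  by apply: List.in_or_app; left.
by apply: List.in_or_app; right.
Qed.

Lemma In_map (U : Type) (f : U -> T) (u : U) (s : seq U) :
  List.In u s -> List.In (f u) (map f s).
Proof. elim: s => //= y s IH [->|/IH h]; [by left | by right]. Qed.
End ListIn.

Lemma In_mem (T : eqType) (x : T) (s : seq T) : x \in s -> List.In x s.
Proof. elim: s => //= y s IH; rewrite inE => /orP [/eqP ->|/IH h]; [by left|by right]. Qed.
Section Conv.
Variable R : realType.
Variable F : finFieldType.
Variable M : nat.
Local Notation Seq := (nat -> 'I_M -> F).

Lemma real_bound (a N X S T eps : R) : 0 <= a -> 0 < N -> 0 <= S -> 0 < eps ->
  a * N <= (a + 1) * X + S -> (a + 1) * X <= a * N + S ->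
  S * T <= N -> 1 <= eps * T ->
  `|a / (a + 1) - X / N| <= eps.
Proof.
move=> a0 N0 S0 e0 h1 h2 h3 h4.
have a1 : 0 < a + 1 by lra.
have -> : a / (a + 1) - X / N = (a * N - (a + 1) * X) / ((a + 1) * N).
  by field; apply/andP; split; apply: lt0r_neq0.
rewrite normf_div (ger0_norm (ltW (mulr_gt0 a1 N0))) ler_pdivrMr ?mulr_gt0 //.
have hS : S <= eps * N.
  apply: (@le_trans _ _ (S * (eps * T))); first by rewrite -{1}(mulr1 S) ler_wpM2l.
  by rewrite mulrCA ler_wpM2l // ltW.
have : `|a * N - (a + 1) * X| <= S by rewrite ler_norml; apply/andP; split; lra.
move=> h; apply: (le_trans h); apply: (le_trans hS).
rewrite mulrDl mul1r mulrDr lerDr; apply: mulr_ge0; first exact: ltW.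
by apply: mulr_ge0 => //; exact: ltW.
Qed.

Lemma conv (a : Seq) : (forall t, exists N0, forall n, (N0 <= n)%N -> ~~ badp t n a) ->
  (fun n => ((linear_complexity a n)%:R / n%:R : R)) @ \oo --> (M%:R / (M.+1)%:R : R).
Proof.
move=> H; apply/cvgrPdist_le => eps e0.
have [t ht] : exists t : nat, 1 <= eps * (t.+1)%:R.
  have hy : 0 <= eps^-1 by rewrite invr_ge0 ltW.
  have := archi_boundP hy; set K := Num.Def.archi_bound _ => hK.
  exists K; rewrite -ler_pdivrMl // mulr1.
  apply: (le_trans (ltW hK)); rewrite ler_nat; exact: leqnSn.
have [N0 HN] := H t.
exists N0.+1 => // n /= hn.
have := HN n (ltnW hn); rewrite /badp negb_or -!leqNgt => /andP [b1 b2].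
set x := linear_complexity a n in b1 b2 *.
set s := (n %/ t.+1)%N in b1 b2.
have hs : (s * t.+1 <= n)%N by apply: leq_trunc_div.
rewrite -[(M.+1)%:R]natr1.
apply: (@real_bound M%:R n%:R x%:R s%:R (t.+1)%:R) => //.
- by rewrite ltr0n; lia.
- by move: b1; rewrite -(ler_nat R) !natrD !natrM; lra.
- by move: b2; rewrite -(ler_nat R) !natrD !natrM; lra.
- by move: hs; rewrite -(ler_nat R) natrM.
Qed.

End Conv.
Theorem mainTheorem16 (R : realType) (F : finFieldType) (M : nat) :
  (0 < M)%N ->
  almost_all R (fun a : nat -> 'I_M -> F =>
    (fun n : nat => ((linear_complexity a n)%:R / n%:R : R)) @ \oo
      --> (M%:R / (M.+1)%:R : R)).
Proof.
move=> M0; rewrite /almost_all /null_set => eps e0.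
pose C : R := (2 * #|F| ^ M)%:R.
have C0 : 0 < C by rewrite ltr0n muln_gt0 expn_gt0 q_gt0.
have hK : forall t : nat, exists K, (0 < K)%N /\
    hh R K <= (eps / 2 * hh R t.+1) / (C * 2 * (t.+1)%:R).
  move=> t; apply: hh_small; apply: divr_gt0.
    by apply: mulr_gt0; [lra | exact: hh_gt0].
  by rewrite !mulr_gt0 // ltr0n.
have [K HK] := choice hK.
pose Nt t := (t.+1 * K t)%N.
have [Kd [_ HKd]] := @hh_small R (eps / 2) ltac:(lra).
pose g n : seq (nat * (nat -> 'I_M -> F)) :=
  ((n.+1 + Kd)%N, fun _ _ => 0) ::
  flatten [seq [seq (n, ext w) | w <- enum (Badset F M t n)] | t <- iota 0 n & (Nt t <= n)%N].
have gne : forall n, (0 < size (g n))%N by [].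
apply: (flat_cover gne).
  move=> a /= Ea.
  have : ~ (forall t, exists N0, forall n, (N0 <= n)%N -> ~~ badp t n a).
    by move=> h; apply: Ea; exact: conv.
  move=> /existsNP [t Ht].
  have [n [hn hb]] : exists n, (Nt t <= n)%N /\ badp t n a.
    apply: contrapT => hc; apply: Ht; exists (Nt t) => n hn; apply/negP => hb.
    by apply: hc; exists n.
  exists n.
  have hlc : linear_complexity (ext (trunc n a)) n = linear_complexity a n.
    by apply: lc_ext => i m h; rewrite ext_trunc.
  have htn : (t < n)%N.
    have := (HK t).1; move: hn; rewrite /Nt; nia.
  have hIn : List.In (n, ext (trunc n a)) (g n).
    right; apply: (In_flatten (s := [seq (n, ext w) | w <- enum (Badset F M t n)])).
      apply: (In_map (fun w => (n, ext w))); apply: In_mem.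
      by rewrite mem_enum inE /badp hlc.
    apply: (In_map (fun t => [seq (n, ext w) | w <- enum (Badset F M t n)])).
    by apply: In_mem; rewrite mem_filter hn mem_iota /= add0n.
  have [i [hi hx]] := In_idx (@x0 F M) hIn.
  exists i; split => //; rewrite hx /= => j hj m.
  by rewrite ext_trunc.
move=> N.
have inner : forall n : 'I_N, \sum_(c <- g n) (#|F|%:R : R) ^- (M * c.1) <=
    hh R n.+1 * (eps / 2) + \sum_(t < N | (Nt t <= n)%N) C * hh R (n %/ t.+1).
  move=> n; rewrite big_cons /= big_flatten /= big_map big_filter.
  apply: lerD.
    apply: (le_trans (mu_le_hh R F M0 _)); rewrite hhD ler_wpM2l ?hh_ge0 //.
  have -> : iota 0 n = index_iota 0 n by rewrite /index_iota subn0.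
  rewrite (big_nat_widen _ _ _ _ _ (ltnW (ltn_ord n))).
  rewrite big_mkord.
  rewrite [X in X <= _](eq_bigl (fun t : 'I_N => (Nt t <= n)%N)); last first.
    move=> t /=; case h: (Nt t <= n)%N => //=.
    have := (HK t).1; move: h; rewrite /Nt; nia.
  apply: ler_sum => t ht.
  rewrite big_map big_enum /= sumr_const -[_ *+ #|Badset F M t n|]mulr_natl.
  exact: level_bound.
apply: (@le_trans _ _ (\sum_(n < N) (hh R n.+1 * (eps / 2) +
    \sum_(t < N | (Nt t <= n)%N) C * hh R (n %/ t.+1)))).
  by apply: ler_sum => n _; exact: inner.
rewrite big_split /= -mulr_suml.
rewrite (exchange_big_dep xpredT) //=.
have H2 : \sum_(t < N) \sum_(n < N | true && (Nt t <= n)%N) C * hh R (n %/ t.+1)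
    <= \sum_(t < N) (eps / 2 * hh R t.+1).
  apply: ler_sum => t _.
  rewrite -mulr_sumr.
  apply: (@le_trans _ _ (C * (2 * (t.+1)%:R * hh R (K t)))).
    apply: ler_wpM2l; first exact: ltW.
    exact: (tail R (K t) N (ltn0Sn t)).
  have pos : 0 < C * 2 * (t.+1)%:R by rewrite !mulr_gt0 // ltr0n.
  have := (HK t).2; rewrite ler_pdivlMr // => h.
  have -> : C * (2 * (t.+1)%:R * hh R (K t)) = hh R (K t) * (C * 2 * (t.+1)%:R) by ring.
  exact: h.
apply: le_trans (lerD (lexx _) H2) _.
rewrite -mulr_sumr.
have g1 := geo_le1 R N.
have g0 : 0 <= \sum_(i < N) hh R i.+1 by apply: sumr_ge0 => i _; exact: hh_ge0.
nra.
Qed.
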